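(* Let $\varphi(\lambda,\mu,a_1,\dots,a_n)$ be a smooth function and let $M$ be an open subset of $\mathbb{R}^{2n}$ with coordinates $(\boldsymbol\lambda,\boldsymbol\mu)=(\lambda_1,\dots,\lambda_n,\mu_1,\dots,\mu_n)$ on which the system $$\varphi(\lambda_i,\mu_i,a_1,\dots,a_n)=0,\qquad i=1,\dots,n,$$ is solved for the parameters by smooth functions $a_k=h_k(\boldsymbol\lambda,\boldsymbol\mu)$, $k=1,\dots,n$, such that the $n\times n$ matrix $\left(\partial\varphi_s/\partial a_r\right)$, where $\varphi_s:=\varphi(\lambda_s,\mu_s,a_1,\dots,a_n)$, is invertible at $a=h(\boldsymbol\lambda,\boldsymbol\mu)$. Let $c(\lambda,\mu)$ be any $C^2$ function and let $$\pi=\sum_{i=1}^n c(\lambda_i,\mu_i)\frac{\partial}{\partial\lambda_i}\wedge\frac{\partial}{\partial\mu_i}.$$ Then $\{h_i,h_j\}_\pi=0$ for all $i,j=1,\dots,n$.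
   Context: The Poisson bracket of $\pi$ is $\{f,g\}_\pi=\sum_{k=1}^n\left(\frac{\partial f}{\partial\lambda_k}\frac{\partial g}{\partial\mu_k}-\frac{\partial f}{\partial\mu_k}\frac{\partial g}{\partial\lambda_k}\right)c(\lambda_k,\mu_k)$. *)

(* Defs.v *)
From HB Require Import structures.
From mathcomp Require Import all_boot all_order all_algebra.
From mathcomp Require Import all_classical all_reals all_analysis.
Set Implicit Arguments. Unset Strict Implicit. Unset Printing Implicit Defensive.
Import Order.TTheory GRing.Theory Num.Theory.
Import numFieldNormedType.Exports.
Local Open Scope classical_set_scope.
Local Open Scope ring_scope.

(* C^k on a set A (meant for open A): k-fold differentiability with all
   iterated directional derivatives continuous on A. *)
Fixpoint Ck_on {R : realType} {V : normedModType R} (A : set V) (k : nat)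
    (f : V -> R) : Prop :=
  match k with
  | 0 => forall x, A x -> {for x, continuous f}
  | k'.+1 => (forall x, A x -> differentiable f x) /\
             (forall v : V, Ck_on A k' (fun x => 'D_v f x))
  end.

Definition smooth_on {R : realType} {V : normedModType R} (A : set V)
    (f : V -> R) : Prop := forall k, Ck_on A k f.

Definition evec {R : realType} {n : nat} (k : 'I_n) : 'rV[R]_n := delta_mx 0 k.

(* Points of R^{2n} are pairs (lambda, mu) of row vectors. *)
Definition dlam {R : realType} {n : nat} (k : 'I_n)
    (f : 'rV[R]_n * 'rV[R]_n -> R) (p : 'rV[R]_n * 'rV[R]_n) : R :=
  'D_(evec k, 0) f p.
Definition dmu {R : realType} {n : nat} (k : 'I_n)
    (f : 'rV[R]_n * 'rV[R]_n -> R) (p : 'rV[R]_n * 'rV[R]_n) : R :=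
  'D_(0, evec k) f p.

Definition pbracket {R : realType} {n : nat} (c : R -> R -> R)
    (f g : 'rV[R]_n * 'rV[R]_n -> R) (p : 'rV[R]_n * 'rV[R]_n) : R :=
  \sum_(k < n) (dlam k f p * dmu k g p - dmu k f p * dlam k g p)
               * c (p.1 0 k) (p.2 0 k).

(* Main.v *)
Require Import Defs.
From HB Require Import structures.
From mathcomp Require Import all_boot all_order all_algebra ring.
From mathcomp Require Import all_classical all_reals all_analysis.
Import Order.TTheory GRing.Theory Num.Theory.
Import numFieldNormedType.Exports.
Local Open Scope classical_set_scope.
Local Open Scope ring_scope.

Lemma alg (R : comUnitRingType) n (A L U : 'M[R]_n) (d1 d2 c : 'rV[R]_n) :
  A \in unitmx -> A *m L = - diag_mx d1 -> A *m U = - diag_mx d2 ->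
  forall i j, \sum_k (L i k * U j k - U i k * L j k) * c 0 k = 0.
Proof.
move=> uA hL hU i j.
have eL : L = - (invmx A *m diag_mx d1) by rewrite -mulmxN -hL mulKmx.
have eU : U = - (invmx A *m diag_mx d2) by rewrite -mulmxN -hU mulKmx.
have key : L *m diag_mx c *m U^T = U *m diag_mx c *m L^T.
  rewrite eL eU !raddfN /= !mulNmx !opprK !trmx_mul !tr_diag_mx.
  rewrite !mulmxA; congr (_ *m _); rewrite -!mulmxA !mulmx_diag.
  congr (_ *m diag_mx _); apply/rowP => k; rewrite !mxE.
  by ring.
have := congr1 (fun M : 'M[R]_n => M i j) key.
rewrite !mxE => /eqP; rewrite -subr_eq0 => /eqP e.
rewrite -[RHS]e -sumrB; apply: eq_bigr => k _.
by rewrite !mul_mx_diag !mxE; ring.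
Qed.

Lemma lin_diff (R : realType) (U W : normedModType R) (f : U -> W) :
  linear f -> continuous f -> forall x, differentiable f x /\ forall v, 'D_v f x = f v.
Proof.
move=> lf cf x.
pose L : {linear U -> W} := HB.pack f (GRing.isLinear.Build _ _ _ _ f lf).
have -> : f = L by [].
split; first exact: linear_differentiable.
by move=> v; rewrite deriveE ?diff_lin //; exact: linear_differentiable.
Qed.

Lemma coord1 (R : realType) n (s : 'I_n) :
  linear (fun q : 'rV[R]_n * 'rV[R]_n => q.1 0 s) /\
  continuous (fun q : 'rV[R]_n * 'rV[R]_n => q.1 0 s).
Proof.
split; first by move=> a x y; rewrite /= !mxE.
move=> x; apply: (@continuous_comp _ _ _ fst (fun M : 'rV[R]_n => M 0 s) x).
  exact: cvg_fst.
exact: coord_continuous.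
Qed.

Lemma coord2 (R : realType) n (s : 'I_n) :
  linear (fun q : 'rV[R]_n * 'rV[R]_n => q.2 0 s) /\
  continuous (fun q : 'rV[R]_n * 'rV[R]_n => q.2 0 s).
Proof.
split; first by move=> a x y; rewrite /= !mxE.
move=> x; apply: (@continuous_comp _ _ _ snd (fun M : 'rV[R]_n => M 0 s) x).
  exact: cvg_snd.
exact: coord_continuous.
Qed.

Lemma row_diff (R : realType) n (h : 'I_n -> 'rV[R]_n * 'rV[R]_n -> R) p :
  (forall k, differentiable (h k) p) ->
  differentiable (fun q => \row_k h k q) p /\
  forall v, 'D_v (fun q => \row_k h k q) p = \row_k 'D_v (h k) p.
Proof.
move=> hd.
have E : (fun q => \row_k h k q) = \sum_(k < n) (fun q => h k q *: (delta_mx 0 k : 'rV[R]_n)).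
  apply/funext => q; apply/rowP => j.
  rewrite fct_sumE summxE mxE (bigD1 j) //= !mxE eqxx /= eqxx mulr1 big1 ?addr0 // => k kj.
  by rewrite !mxE /= eq_sym (negPf kj) mulr0.
have dd : differentiable (fun q => \row_k h k q) p.
  rewrite E; apply: differentiable_sum => k; exact: differentiableZl.
split => // v.
rewrite derive_mx; last exact: diff_derivable.
apply/rowP => j; rewrite !mxE.
by congr ('D_v _ p); apply/funext => t; rewrite mxE.
Qed.

Lemma Dphi (R : realType) n (phi : R -> R -> 'rV[R]_n -> R) y (e : 'rV[R]_n) :
  'D_((0,0),e) (fun x : (R * R) * 'rV[R]_n => phi x.1.1 x.1.2 x.2) y =
  'D_e (phi y.1.1 y.1.2) y.2.
Proof.
rewrite /derive /=.
have -> : (fun h : R => h^-1 *: (phi (h *: ((0 : R, 0 : R), e) + y).1.1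
   (h *: ((0 : R, 0 : R), e) + y).1.2 (h *: ((0 : R, 0 : R), e) + y).2 - phi y.1.1 y.1.2 y.2))
  = (fun h : R => h^-1 *: (phi y.1.1 y.1.2 (h *: e + y.2) - phi y.1.1 y.1.2 y.2)).
  by apply/funext => t /=; rewrite !scaler0 !add0r.
by [].
Qed.

Lemma pair0sum (R : realType) (V W : normedModType R) n (r : 'I_n -> W) :
  ((0 : V), \sum_k r k) = \sum_k ((0 : V), r k).
Proof.
elim/big_rec2: _ => // k x y _ <-.
by rewrite [(0,r k) + _]/GRing.add /= /add_pair /= addr0.
Qed.

Lemma pair_ext (V W : Type) (x y : V * W) : x.1 = y.1 -> x.2 = y.2 -> x = y.
Proof. by case: x => ? ?; case: y => ? ? /= -> ->. Qed.

Lemma fst_sum (V W : zmodType) n (f : 'I_n -> V * W) :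
  (\sum_k f k).1 = \sum_k (f k).1.
Proof. by elim/big_rec2: _ => // k x y _ <-. Qed.

Lemma snd_sum (V W : zmodType) n (f : 'I_n -> V * W) :
  (\sum_k f k).2 = \sum_k (f k).2.
Proof. by elim/big_rec2: _ => // k x y _ <-. Qed.

Lemma dec3 (R : realType) n (a b : R) (r : 'rV[R]_n) :
  (((a, b), r) : (R * R) * 'rV[R]_n) =
  a *: (((1, 0), 0) : (R * R) * 'rV[R]_n) + b *: ((0, 1), 0) +
  \sum_k r 0 k *: ((0, 0), delta_mx 0 k).
Proof.
apply: pair_ext.
  rewrite /= fst_sum /= big1 => [|k _]; last by apply: pair_ext; rewrite /= scaler0.
  by apply: pair_ext => /=; rewrite scaler0 ?addr0 ?add0r; apply/esym; exact: mulr1.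
rewrite /= snd_sum /= !scaler0 !add0r.
apply/rowP => j; rewrite summxE (bigD1 j) //= !mxE eqxx /= eqxx mulr1 big1 ?addr0 // => k kj.
by rewrite !mxE /= eq_sym (negPf kj) mulr0.
Qed.

Lemma key_s (R : realType) n (phi : R -> R -> 'rV[R]_n -> R)
  (h : 'I_n -> 'rV[R]_n * 'rV[R]_n -> R) (p : 'rV[R]_n * 'rV[R]_n) (s : 'I_n)
  (v : 'rV[R]_n * 'rV[R]_n) :
  (forall y, differentiable (fun x : (R * R) * 'rV[R]_n => phi x.1.1 x.1.2 x.2) y) ->
  (forall k, differentiable (h k) p) ->
  nbhs p (fun q : 'rV[R]_n * 'rV[R]_n => phi (q.1 0 s) (q.2 0 s) (\row_k h k q) = 0) ->
  let F := (fun x : (R * R) * 'rV[R]_n => phi x.1.1 x.1.2 x.2) in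
  let y := ((p.1 0 s, p.2 0 s), \row_k h k p) in
  v.1 0 s * 'D_((1,0),0) F y + v.2 0 s * 'D_((0,1),0) F y +
  \sum_r 'D_v (h r) p * 'D_(delta_mx 0 r) (phi (p.1 0 s) (p.2 0 s)) (\row_k h k p) = 0.
Proof.
move=> hF hd hz F y.
pose g := fun q : 'rV[R]_n * 'rV[R]_n => ((q.1 0 s, q.2 0 s), \row_k h k q).
have [rd rD] := @row_diff R n h p hd.
have [l1 c1] := coord1 R n s.
have [l2 c2] := coord2 R n s.
have [d1 D1] := @lin_diff R _ _ _ l1 c1 p.
have [d2 D2] := @lin_diff R _ _ _ l2 c2 p.
have dg : differentiable g p.
  exact: (differentiable_pair (differentiable_pair d1 d2) rd).
have G0 : 'D_v (F \o g) p = 0.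
  rewrite (@near_eq_derive _ _ _ _ (cst 0)) ?derive_cst //.
rewrite deriveE in G0; last exact: differentiable_comp.
rewrite diff_comp // /= in G0.
have dgv : 'd g p v = ((v.1 0 s, v.2 0 s), \row_k 'D_v (h k) p).
  rewrite /g diff_pair //; last exact: (differentiable_pair d1 d2).
  rewrite (@diff_pair _ _ _ _ (fun q : 'rV[R]_n * 'rV[R]_n => q.1 0 s) (fun q : 'rV[R]_n * 'rV[R]_n => q.2 0 s) p d1 d2) /= -!deriveE //.
  by rewrite D1 D2 rD.
rewrite dgv dec3 !linearD !linearZ linear_sum /= in G0.
rewrite -[RHS]G0 -!deriveE //.
congr (_ + _ + _); apply: eq_bigr => r _; rewrite linearZ /= -deriveE // mxE.
by rewrite Dphi.
Qed.

Theorem theorem4 (R : realType) (n : nat)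
  (phi : R -> R -> 'rV[R]_n -> R)
  (M : set ('rV[R]_n * 'rV[R]_n))
  (h : 'I_n -> 'rV[R]_n * 'rV[R]_n -> R)
  (c : R -> R -> R) :
  smooth_on setT (fun x : (R * R) * 'rV[R]_n => phi x.1.1 x.1.2 x.2) ->
  open M ->
  (forall k, smooth_on M (h k)) ->
  (forall p, M p -> forall i : 'I_n,
     phi (p.1 0 i) (p.2 0 i) (\row_k h k p) = 0) ->
  (forall p, M p ->
     (\matrix_(s < n, r < n)
        'D_(evec r) (phi (p.1 0 s) (p.2 0 s)) (\row_k h k p)) \in unitmx) ->
  Ck_on setT 2 (fun x : R * R => c x.1 x.2) ->
  forall i j : 'I_n, forall p, M p -> pbracket c (h i) (h j) p = 0.
Proof.
move=> hphi oM hh hroot hunit _ i j p Mp.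
set F := fun x : (R * R) * 'rV[R]_n => phi x.1.1 x.1.2 x.2.
have hF : forall y, differentiable F y by move=> y; exact: ((hphi 1%N).1 y I).
have hd : forall k, differentiable (h k) p by move=> k; exact: ((hh k 1%N).1 p Mp).
have nM : nbhs p M by rewrite openE in oM; exact: oM.
have hz : forall s : 'I_n, nbhs p (fun q : 'rV[R]_n * 'rV[R]_n =>
    phi (q.1 0 s) (q.2 0 s) (\row_k h k q) = 0).
  by move=> s; apply: filterS nM => q Mq; exact: hroot.
pose y s := ((p.1 0 s, p.2 0 s), \row_k h k p).
pose A := \matrix_(s < n, r < n)
        'D_(evec r) (phi (p.1 0 s) (p.2 0 s)) (\row_k h k p).
pose L := \matrix_(r < n, k < n) dlam k (h r) p.
pose U := \matrix_(r < n, k < n) dmu k (h r) p.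
pose d1 := \row_(s < n) 'D_((1,0),0) F (y s).
pose d2 := \row_(s < n) 'D_((0,1),0) F (y s).
pose cc := \row_(k < n) c (p.1 0 k) (p.2 0 k).
have hL : A *m L = - diag_mx d1.
  apply/matrixP => s k; rewrite !mxE.
  have := @key_s R n phi h p s (evec k, 0) hF hd (hz s).
  rewrite /= !mxE /= mul0r addr0 => /eqP; rewrite addrC addr_eq0 => /eqP e.
  apply: (etrans _ (etrans e _)); last by rewrite mulr_natl.
  by apply: eq_bigr => r _; rewrite !mxE mulrC /dlam.
have hU : A *m U = - diag_mx d2.
  apply/matrixP => s k; rewrite !mxE.
  have := @key_s R n phi h p s (0, evec k) hF hd (hz s).
  rewrite /= !mxE /= mul0r add0r => /eqP; rewrite addrC addr_eq0 => /eqP e.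
  apply: (etrans _ (etrans e _)); last by rewrite mulr_natl.
  by apply: eq_bigr => r _; rewrite !mxE mulrC /dmu.
have := @alg _ n A L U d1 d2 cc (hunit p Mp) hL hU i j.
rewrite /pbracket => e; rewrite -[RHS]e.
by apply: eq_bigr => k _; rewrite !mxE.
Qed.
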